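(* With probability at least $1-\delta/4$, for all $1\le t\le T$ and all $\mathbf{x}\in\mathcal{X}$, \[ |\mu_{\mathrm{fb}[t]}(\mathbf{x})-\widetilde\mu_{\mathrm{fb}[t]}(\mathbf{x})|\le 2\hat K_0\frac{t^2(L+1)\varepsilon}{\sigma^4}\Big(B'+\sigma\sqrt{2\log(4T/\delta)}\Big). \]
   Context: $\mathcal{X}$ is a finite subset of the unit ball of $\mathbb{R}^d$; $f:\mathcal{X}\to\mathbb{R}$ with $|f(\mathbf{x})|\le B'$; observations $y_\tau=f(\mathbf{x}_\tau)+\zeta_\tau$ with $\zeta_\tau\sim\mathcal{N}(0,\sigma^2)$ i.i.d.; $\delta\in(0,1)$, $T$ is the horizon. $k$ is the exact NTK with $k\le K_0$, $\widetilde k(\mathbf{x},\mathbf{x}')=\langle\nabla_\theta f(\mathbf{x};\theta_0),\nabla_\theta f(\mathbf{x}';\theta_0)\rangle$ the empirical NTK of a network with $L+1$ layers; assume $|\widetilde k-k|\le(L+1)\varepsilon$ on $\mathcal{X}\times\mathcal{X}$, $(L+1)\varepsilon\le1$, $\sigma^2\le1$, $\hat K_0=\max\{1,K_0\}$. Queries are indexed sequentially and $\mathrm{fb}[t]\le t-1$ is the number of observed queries when $\mathbf{x}_t$ is chosen. $\mu_{\mathrm{fb}[t]}(\mathbf{x})=\mathbf{k}_t(\mathbf{x})^\top(\mathbf{K}_t+\sigma^2I)^{-1}\mathbf{y}_t$ with $\mathbf{k}_t(\mathbf{x})=(k(\mathbf{x},\mathbf{x}_\tau))_{\tau\le\mathrm{fb}[t]}$,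 $\mathbf{K}_t=(k(\mathbf{x}_\tau,\mathbf{x}_{\tau'}))_{\tau,\tau'\le\mathrm{fb}[t]}$, $\mathbf{y}_t=(y_\tau)_{\tau\le\mathrm{fb}[t]}$; $\widetilde\mu_{\mathrm{fb}[t]}$ is defined identically with $\widetilde k$. *)

(* Defs.v *)
From HB Require Import structures.
From mathcomp Require Import all_boot all_order all_algebra.
From mathcomp Require Import all_classical all_reals all_analysis.
From mathcomp Require Import probability normal_distribution.
Set Implicit Arguments. Unset Strict Implicit. Unset Printing Implicit Defensive.
Import Order.TTheory GRing.Theory Num.Theory.
Local Open Scope classical_set_scope.
Local Open Scope ring_scope.

Definition kernel_sym (R : realType) (X : Type) (k : X -> X -> R) :=
  forall x x', k x x' = k x' x.

Definition kernel_psd (R : realType) (X : Type) (k : X -> X -> R) :=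
  forall (n : nat) (xs : 'I_n -> X) (c : 'I_n -> R),
    0 <= \sum_(i < n) \sum_(j < n) c i * c j * k (xs i) (xs j).

(* empirical NTK: inner product of the gradient features g x = grad_theta f(x; theta_0) *)
Definition emp_kernel (R : realType) (X : Type) (p : nat) (g : X -> 'rV[R]_p)
  (x x' : X) : R := (g x *m (g x')^T) 0 0.

(* GP posterior mean  k_n(x)^T (K_n + s2 I)^{-1} y_n  built from n observations
   (xs i, ys i), i < n  (i corresponds to the query index i+1). *)
Definition gp_mean (R : realType) (X : Type) (k : X -> X -> R) (s2 : R) (n : nat)
  (xs : 'I_n -> X) (ys : 'I_n -> R) (x : X) : R :=
  ((\row_(i < n) k x (xs i))
     *m invmx ((\matrix_(i < n, j < n) k (xs i) (xs j)) + s2%:M)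
     *m (\col_(i < n) ys i)) 0 0.

Definition mu_fb (R : realType) (d : measure_display) (Omega : measurableType d)
  (X : Type) (k : X -> X -> R) (sigma : R) (f : X -> R)
  (zeta : nat -> Omega -> R) (xq : nat -> Omega -> X) (fb : nat -> Omega -> nat)
  (t : nat) (w : Omega) (x : X) : R :=
  gp_mean k (sigma ^+ 2) (fun i : 'I_(fb t w) => xq i.+1 w)
    (fun i : 'I_(fb t w) => f (xq i.+1 w) + zeta i.+1 w) x.

(* X has law N(0, sigma^2)  (normal_prob m s has standard deviation s) *)
Definition normal_law (R : realType) (d : measure_display) (Omega : measurableType d)
  (P : probability Omega R) (Z : Omega -> R) (sigma : R) :=
  forall A : set R, measurable A -> P (Z @^-1` A) = normal_prob 0 sigma A.

(* mutual independence of zeta_1, ..., zeta_T (product rule over the whole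
   family; taking A j = setT recovers every subfamily) *)
Definition mutually_independent (R : realType) (d : measure_display)
  (Omega : measurableType d) (P : probability Omega R)
  (zeta : nat -> Omega -> R) (T : nat) :=
  forall A : nat -> set R, (forall j, measurable (A j)) ->
    P (\bigcap_(j in [set j : nat | (1 <= j <= T)%N]) (zeta j @^-1` A j)) =
    (\prod_(1 <= j < T.+1) P (zeta j @^-1` A j))%E.

(* Main.v *)
Require Import Defs.
From HB Require Import structures.
From mathcomp Require Import all_boot all_order all_algebra.
From mathcomp Require Import all_classical all_reals all_analysis.
From mathcomp Require Import probability normal_distribution.
From mathcomp Require Import measurable_realfun.
From mathcomp Require Import ring lra.
Import Order.TTheory GRing.Theory Num.Theory.
Local Open Scope classical_set_scope.
Local Open Scope ring_scope.

Import Order.TTheory GRing.Theory Num.Theory.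
Local Open Scope classical_set_scope.
Local Open Scope ring_scope.
From mathcomp Require Import ring lra.
Local Open Scope ereal_scope.
Lemma pdf_even (R : realType) (s : R) : (s != 0)%R -> normal_pdf 0 s =1 normal_pdf 0 s \o -%R.
Proof.
move=> s0 x; rewrite /= !normal_pdfE //.
by rewrite /normal_fun !subr0 sqrrN.
Qed.

Lemma half_int (R : realType) (s : R) : (0 < s)%R ->
  \int[lebesgue_measure]_(x in [set x : R | (0 <= x)%R]) (normal_pdf 0 s x)%:E = (2^-1)%:E.
Proof.
move=> s0; have s0' : (s != 0)%R by rewrite gt_eqF.
have := ge0_symfun_integralT (f := normal_pdf 0 s) (@normal_pdf_ge0 _ 0 s)
  (continuous_normal_pdf s0') (@pdf_even R s s0').
rewrite integral_normal_pdf.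
set I := (X in 2%:E * X) => h.
have -> : \int[lebesgue_measure]_(x in [set x : R | (0 <= x)%R]) (normal_pdf 0 s x)%:E = I by [].
move: h.
have : 0 <= I by apply: integral_ge0 => x _; rewrite lee_fin normal_pdf_ge0.
case: I => [r| |] //=; last by rewrite mulry gtr0_sg // mul1e.
move=> _ /eqP; rewrite -EFinM eqe => /eqP h.
congr (EFin _). by apply: (@mulfI _ 2) => //; rewrite -h mulfV.
Qed.
Lemma shift_int (R : realType) (s c : R) : (s != 0)%R ->
  \int[lebesgue_measure]_(x in `[c, +oo[) (normal_pdf c s x)%:E =
  \int[lebesgue_measure]_(x in `[0%R, +oo[) (normal_pdf 0 s x)%:E.
Proof.
move=> s0.
pose F := fun x : R^o => (x + c)%R.
have F'E : F^`()%classic = cst 1%R.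
  by apply/funext => x; rewrite /F derive1E deriveD// derive_id derive_cst addr0.
transitivity (\int[lebesgue_measure]_(x in `[F 0%R, +oo[) (normal_pdf c s x)%:E).
  by rewrite /F add0r.
rewrite (@increasing_ge0_integration_by_substitutiony R F (normal_pdf c s) 0%R).
- apply: eq_integral => x _; rewrite F'E /= mulr1 !normal_pdfE //.
  by rewrite /normal_fun /F /= (_ : (x + c - c = x - 0 :> R)%R) //; ring.
- by move=> x y _ _; rewrite /F ltrD2r.
- by rewrite F'E => ? _; exact: cvg_cst.
- by rewrite F'E; exact: is_cvg_cst.
- by rewrite F'E; exact: is_cvg_cst.
- split.
  + by move=> x _; apply: derivableD.
  + apply: cvg_at_right_filter; rewrite /F; apply: cvgD; [exact: cvg_id | exact: cvg_cst].
- rewrite /F; exact: cvg_addrr.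
- first [ exact: (continuous_subspaceT (continuous_normal_pdf s0)) | exact: (@continuous_subspaceT R R _ _ (continuous_normal_pdf s0)) | (apply/continuous_within_itvcyP; split; [move=> x _; exact: continuous_normal_pdf | apply: cvg_at_right_filter; exact: continuous_normal_pdf]) ].
- by move=> x _; exact: normal_pdf_ge0.
Qed.

Lemma meas_S (R : realType) (c : R) : measurable [set r : R | (c < `|r|)%R].
Proof.
have -> : [set r : R | (c < `|r|)%R] = setT `&` (Num.Def.normr @^-1` `]c, +oo[%classic).
  by apply/seteqP; split => x /=; rewrite in_itv /= andbT // => -[].
apply: (@measurable_realfun.normr_measurable R setT) => //; exact: measurable_itv.
Qed.

Lemma tail (R : realType) (s c : R) : (0 < s)%R -> (0 <= c)%R ->
  normal_prob 0 s [set r : R | (c < `|r|)%R] <= (expR (- c ^+ 2 / (s ^+ 2 *+ 2)))%:E.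
Proof.
move=> s0 c0; have s0' : (s != 0)%R by rewrite gt_eqF.
set u := expR _.
have mA : measurable (`]-oo, (- c)%R]%classic : set R) by exact: measurable_itv.
have mB : measurable (`[c, +oo[%classic : set R) by exact: measurable_itv.
apply: (@le_trans _ _ (normal_prob 0 s (`]-oo, (- c)%R] `|` `[c, +oo[))).
  apply: le_measure; rewrite ?inE //; [exact: meas_S | exact: measurableU |].
  move=> x /= cx; rewrite /= !in_itv /=.
  case: (lerP 0 x) => x0; [right | left].
    by rewrite andbT; rewrite ger0_norm // in cx; apply: ltW.
  by rewrite ltr0_norm // in cx; rewrite lerNr ltW.
apply: le_trans; first exact: (@measureU2 _ _ _ (normal_prob 0 s) _ _ mA mB).
have hB : normal_prob 0 s `[c, +oo[ <= (u / 2)%:E.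
  rewrite /normal_prob.
  apply: (@le_trans _ _ (\int[lebesgue_measure]_(x in `[c, +oo[) (u%:E * (normal_pdf c s x)%:E))).
    apply: ge0_le_integral => //.
    - by move=> x _; rewrite lee_fin normal_pdf_ge0.
    - apply/measurable_EFinP; apply: measurable_funTS; exact: measurable_normal_pdf.
    - apply/measurable_EFinP; apply: measurable_funM => //; apply: measurable_funTS; exact: measurable_normal_pdf.
    move=> x /=; rewrite in_itv /= andbT => cx.
    rewrite -EFinM lee_fin !normal_pdfE // /normal_fun /u mulrCA -expRD.
    rewrite ler_pM2l ?normal_peak_gt0 // ler_expR.
    have D0 : (0 < s ^+ 2 *+ 2)%R by rewrite pmulrn_lgt0 // exprn_gt0.
    rewrite !mulNr -opprD lerN2 -mulrDl ler_pM2r ?invr_gt0 //.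
    rewrite subr0; nra.
  rewrite ge0_integralZl //.
  - by rewrite shift_int // set_itvcy half_int // -EFinM.
  - apply/measurable_EFinP; apply: measurable_funTS; exact: measurable_normal_pdf.
  - by move=> x _; rewrite lee_fin normal_pdf_ge0.
  - by rewrite lee_fin /u expR_ge0.
have hA : normal_prob 0 s `]-oo, (- c)%R] = normal_prob 0 s `[c, +oo[.
  rewrite /normal_prob ge0_integration_by_substitutionNy.
  - by apply: eq_integral => x _ /=; rewrite (@pdf_even R s s0' x).
  - apply/continuous_within_itvNycP; split; [move=> x _; exact: continuous_normal_pdf | apply: cvg_at_left_filter; exact: continuous_normal_pdf].
  - by move=> x _; exact: normal_pdf_ge0.
apply: (@le_trans _ _ ((u/2)%:E + (u/2)%:E)).
  apply: leeD; last exact: hB.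
  apply: le_trans hB; rewrite le_eqVlt; apply/orP; left; apply/eqP; exact: hA.
by rewrite -EFinD lee_fin -splitr.
Qed.

Local Close Scope ereal_scope.
Section Det.
Variable R : realType.

Lemma abs_le_sq (x p : R) : 0 <= p -> x ^+ 2 <= p ^+ 2 -> `|x| <= p.
Proof. move=> p0 h; rewrite ler_norml; apply/andP; split; nra. Qed.

Lemma CS {n} (a b : 'I_n -> R) :
  (\sum_i a i * b i) ^+ 2 <= (\sum_i a i ^+ 2) * (\sum_i b i ^+ 2).
Proof.
set A := \sum_i a i ^+ 2; set B := \sum_i b i ^+ 2; set S := \sum_i a i * b i.
have eAB : A * B = \sum_i \sum_j a i ^+ 2 * b j ^+ 2.
  by rewrite /A mulr_suml; apply: eq_bigr => i _; rewrite mulr_sumr.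
have eBA : A * B = \sum_i \sum_j b i ^+ 2 * a j ^+ 2.
  by rewrite mulrC /B mulr_suml; apply: eq_bigr => i _; rewrite mulr_sumr.
have eSS : S * S = \sum_i \sum_j (a i * b i) * (a j * b j).
  by rewrite /S mulr_suml; apply: eq_bigr => i _; rewrite mulr_sumr.
have key : 0 <= A * B + A * B - 2 * (S * S); last by rewrite expr2; lra.
rewrite {1}eAB eBA eSS mulr_sumr -big_split -sumrB /=.
apply: sumr_ge0 => i _; rewrite mulr_sumr -big_split -sumrB /=.
apply: sumr_ge0 => j _.
have -> : a i ^+ 2 * b j ^+ 2 + b i ^+ 2 * a j ^+ 2 - 2 * (a i * b i * (a j * b j)) = (a i * b j - a j * b i) ^+ 2 by ring.
exact: sqr_ge0.
Qed.

Definition psdM {n} (K : 'M[R]_n) := forall c : 'I_n -> R,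
  0 <= \sum_i \sum_j c i * c j * K i j.

Definition nrm {n} (v : 'cV[R]_n) := \sum_i v i 0 ^+ 2.

Lemma nrm_ge0 {n} (v : 'cV[R]_n) : 0 <= nrm v.
Proof. by apply: sumr_ge0 => i _; exact: sqr_ge0. Qed.

Lemma quad {n} (K : 'M[R]_n) s2 (v : 'cV[R]_n) : psdM K ->
  s2 * nrm v <= \sum_i v i 0 * ((K + s2%:M) *m v) i 0.
Proof.
move=> psd.
have e : \sum_i v i 0 * ((K + s2%:M) *m v) i 0 =
   \sum_i \sum_j v i 0 * v j 0 * K i j + s2 * nrm v.
  rewrite /nrm mulr_sumr -big_split /=; apply: eq_bigr => i _.
  rewrite mulmxDl mul_scalar_mx !mxE mulrDr mulr_sumr; congr (_ + _).
    by apply: eq_bigr => j _; ring.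
  ring.
rewrite e lerDr; exact: (psd (fun i => v i 0)).
Qed.

Lemma bound {n} {K : 'M[R]_n} s2 (v u : 'cV[R]_n) : psdM K -> 0 < s2 ->
  (K + s2%:M) *m v = u -> s2 ^+ 2 * nrm v <= nrm u.
Proof.
move=> psd s0 e.
have h1 := quad K s2 v psd; rewrite e in h1.
have h2 := CS (fun i => v i 0) (fun i => u i 0).
have N0 := nrm_ge0 v; have U0 := nrm_ge0 u.
rewrite -/(nrm v) -/(nrm u) in h2.
move: h1 h2; set S := \sum_i _ => h1 h2.
have [->|Np] := eqVneq (nrm v) 0; first by rewrite mulr0.
have Np' : 0 < nrm v by rewrite lt_def Np N0.
have p0 : 0 <= s2 * nrm v by rewrite mulr_ge0 // ltW.
have h3 : (s2 * nrm v) ^+ 2 <= S ^+ 2 by rewrite !expr2 ler_pM.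
rewrite -(ler_pM2r Np').
have -> : s2 ^+ 2 * nrm v * nrm v = (s2 * nrm v) ^+ 2 by ring.
rewrite [X in _ <= X]mulrC; exact: le_trans h3 h2.
Qed.

Lemma psdM_tr {n} {K : 'M[R]_n} : psdM K -> psdM K^T.
Proof.
move=> psd c; rewrite exchange_big /=.
under eq_bigr => i _ do under eq_bigr => j _ do rewrite mxE (mulrC (c j)).
exact: psd.
Qed.

Lemma unitA {n} (K : 'M[R]_n) s2 : psdM K -> 0 < s2 -> K + s2%:M \in unitmx.
Proof.
move=> psd s0; rewrite -row_free_unit; apply: inj_row_free => v hv.
have e : (K^T + s2%:M) *m v^T = 0.
  by rewrite -(tr_scalar_mx n s2) -linearD /= -trmx_mul hv trmx0.
have := bound s2 _ _ (psdM_tr psd) s0 e.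
have -> : nrm (0 : 'cV[R]_n) = 0 by rewrite /nrm big1 // => i _; rewrite mxE expr0n.
move=> h.
have h0 : nrm v^T = 0.
  apply/eqP; rewrite eq_le nrm_ge0 andbT.
  by rewrite -(@ler_pM2l _ (s2 ^+ 2)) ?exprn_gt0 // mulr0.
apply/matrixP => i j; rewrite (ord1 i) mxE.
have := psumr_eq0P (fun k _ => sqr_ge0 (v^T k 0)) h0 (i := j) isT.
by rewrite mxE => /eqP; rewrite sqrf_eq0 => /eqP.
Qed.


Lemma gp_meanE (X : Type) (k : X -> X -> R) s2 n (xs : 'I_n -> X) ys x :
  gp_mean k s2 xs ys x = \sum_i k x (xs i) *
    (invmx (\matrix_(i, j) k (xs i) (xs j) + s2%:M) *m \col_i ys i) i 0.
Proof. by rewrite /gp_mean -mulmxA mxE; apply: eq_bigr => i _; rewrite mxE. Qed.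

Lemma psd_of (X : Type) (k : X -> X -> R) n (xs : 'I_n -> X) :
  kernel_psd k -> psdM (\matrix_(i, j) k (xs i) (xs j)).
Proof.
move=> h c; under eq_bigr do under eq_bigr do rewrite mxE.
exact: h.
Qed.

Lemma sum_le_const n (F : 'I_n -> R) c : (forall i, F i <= c) -> \sum_i F i <= n%:R * c.
Proof.
move=> h; apply: le_trans (_ : \sum_(i < n) c <= _); first by apply: ler_sum => i _.
by rewrite sumr_const card_ord mulr_natl.
Qed.

Lemma sq_le (z c : R) : `|z| <= c -> z ^+ 2 <= c ^+ 2.
Proof. by rewrite ler_norml => /andP[h1 h2]; nra. Qed.

Lemma gp_diff (X : Type) (k1 k2 : X -> X -> R) (s2 e Kb Y : R) n
  (xs : 'I_n -> X) (ys : 'I_n -> R) (x : X) :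
  0 < s2 -> kernel_psd k1 -> kernel_psd k2 -> 0 <= e -> 0 <= Kb -> 0 <= Y ->
  (forall a b, `|k2 a b - k1 a b| <= e) -> (forall a b, `|k2 a b| <= Kb) ->
  (forall i, `|ys i| <= Y) ->
  s2 ^+ 2 * `|gp_mean k1 s2 xs ys x - gp_mean k2 s2 xs ys x|
    <= s2 * (n%:R * e * Y) + n%:R ^+ 2 * Kb * e * Y.
Proof.
move=> s0 p1 p2 e0 Kb0 Y0 hk hKb hy.
rewrite !gp_meanE.
set K1 := \matrix_(i, j) k1 (xs i) (xs j).
set K2 := \matrix_(i, j) k2 (xs i) (xs j).
set y := \col_i ys i.
set a := invmx (K1 + s2%:M) *m y.
set b := invmx (K2 + s2%:M) *m y.
have P1 : psdM K1 by exact: psd_of.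
have P2 : psdM K2 by exact: psd_of.
have hA : (K1 + s2%:M) *m a = y by rewrite /a mulKVmx // unitA.
have hB : (K2 + s2%:M) *m b = y by rewrite /b mulKVmx // unitA.
have n0 : 0 <= n%:R :> R by [].
have Ny : nrm y <= n%:R * Y ^+ 2.
  by apply: sum_le_const => i; rewrite mxE; apply: sq_le.
have Na := bound s2 a y P1 s0 hA.
have Nb := bound s2 b y P2 s0 hB.
set d := a - b.
have hD : (K1 + s2%:M) *m d = (K2 - K1) *m b.
  rewrite /d mulmxBr hA -{1}hB -mulmxBl; congr (_ *m _).
  by rewrite opprD addrACA subrr addr0.
have Nd := bound s2 d _ P1 s0 hD.
have Nr : nrm ((K2 - K1) *m b) <= n%:R * (n%:R * e ^+ 2) * nrm b.
  rewrite -mulrA; apply: sum_le_const => i; rewrite mxE.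
  apply: le_trans (CS (fun j => (K2 - K1) i j) (fun j => b j 0)) _.
  apply: ler_wpM2r; first exact: nrm_ge0.
  by apply: sum_le_const => j; rewrite !mxE; apply: sq_le.
have -> : \sum_i k1 x (xs i) * a i 0 - \sum_i k2 x (xs i) * b i 0 =
   \sum_i (k1 x (xs i) - k2 x (xs i)) * a i 0 + \sum_i k2 x (xs i) * d i 0.
  have dE : forall i, d i 0 = a i 0 - b i 0 by move=> i; rewrite !mxE.
  by rewrite -sumrB -big_split; apply: eq_bigr => i _; rewrite dE /=; ring.
set T1 := \sum_i _ * a i 0.
set T2 := \sum_i _ * d i 0.
have hT1 : T1 ^+ 2 <= n%:R * e ^+ 2 * nrm a.
  apply: le_trans (CS _ _) _; apply: ler_wpM2r; first exact: nrm_ge0.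
  by apply: sum_le_const => j; apply: sq_le; rewrite distrC.
have hT2 : T2 ^+ 2 <= n%:R * Kb ^+ 2 * nrm d.
  apply: le_trans (CS _ _) _; apply: ler_wpM2r; first exact: nrm_ge0.
  by apply: sum_le_const => j; apply: sq_le.
have a1 : s2 * `|T1| <= n%:R * e * Y.
  rewrite -(ger0_norm (ltW s0)) -normrM; apply: abs_le_sq.
    by rewrite !mulr_ge0.
  have q1 := ler_wpM2l (sqr_ge0 s2) hT1.
  have q2 := ler_wpM2l (_ : 0 <= n%:R * e ^+ 2) (le_trans Na Ny).
  have q3 : 0 <= n%:R * e ^+ 2 by rewrite mulr_ge0 // sqr_ge0.
  move: (q2 q3) => {}q2.
  rewrite exprMn; nra.
have a2 : s2 ^+ 2 * `|T2| <= n%:R ^+ 2 * Kb * e * Y.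
  rewrite -(ger0_norm (_ : 0 <= s2 ^+ 2)) ?sqr_ge0 // -normrM; apply: abs_le_sq.
    by rewrite !mulr_ge0.
  have q1 := ler_wpM2l (_ : 0 <= s2 ^+ 4) hT2.
  have c1 : 0 <= s2 ^+ 4 by rewrite exprn_ge0 // ltW.
  move: (q1 c1) => {}q1.
  have c2 : 0 <= n%:R * Kb ^+ 2 * s2 ^+ 2.
    by apply: mulr_ge0; [apply: mulr_ge0 => //; exact: sqr_ge0 | exact: sqr_ge0].
  have q2 := ler_wpM2l c2 (le_trans Nd Nr).
  have c3 : 0 <= n%:R * Kb ^+ 2 * (n%:R * (n%:R * e ^+ 2)).
    apply: mulr_ge0; [apply: mulr_ge0 => //; exact: sqr_ge0 | ].
    by apply: mulr_ge0 => //; apply: mulr_ge0 => //; exact: sqr_ge0.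
  have q3 := ler_wpM2l c3 (le_trans Nb Ny).
  rewrite exprMn.
  have -> : (s2 ^+ 2) ^+ 2 = s2 ^+ 4 by rewrite -exprM.
  nra.
apply: le_trans (_ : s2 ^+ 2 * (`|T1| + `|T2|) <= _).
  by apply: ler_wpM2l; [exact: sqr_ge0 | exact: ler_normD].
have : s2 ^+ 2 * `|T1| <= s2 * (n%:R * e * Y).
  by rewrite expr2 -mulrA ler_wpM2l // ltW.
nra.
Qed.

End Det.

Section Emp.
Variable R : realType.

Lemma empE (X : Type) p (g : X -> 'rV[R]_p) x x' :
  emp_kernel g x x' = \sum_j g x 0 j * g x' 0 j.
Proof. by rewrite /emp_kernel mxE; apply: eq_bigr => j _; rewrite mxE. Qed.

Lemma emp_psd (X : Type) p (g : X -> 'rV[R]_p) : kernel_psd (emp_kernel g).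
Proof.
move=> n xs c.
have -> : \sum_(i < n) \sum_(j < n) c i * c j * emp_kernel g (xs i) (xs j) =
  \sum_(l < p) \sum_(i < n) \sum_(j < n)
   (c i * g (xs i) 0 l) * (c j * g (xs j) 0 l).
  rewrite [RHS]exchange_big /=; apply: eq_bigr => i _.
  rewrite [RHS]exchange_big /=; apply: eq_bigr => j _.
  rewrite empE mulr_sumr; apply: eq_bigr => l _; ring.
apply: sumr_ge0 => l _.
have -> : \sum_(i < n) \sum_(j < n) (c i * g (xs i) 0 l) * (c j * g (xs j) 0 l)
   = (\sum_(i < n) c i * g (xs i) 0 l) ^+ 2.
  by rewrite expr2 mulr_suml; apply: eq_bigr => i _; rewrite mulr_sumr.
exact: sqr_ge0.
Qed.

Lemma emp_diag_ge0 (X : Type) p (g : X -> 'rV[R]_p) x : 0 <= emp_kernel g x x.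
Proof. by rewrite empE; apply: sumr_ge0 => j _; rewrite -expr2 sqr_ge0. Qed.

Lemma emp_bound (X : Type) p (g : X -> 'rV[R]_p) (Kb : R) :
  (forall x, emp_kernel g x x <= Kb) -> forall x x', `|emp_kernel g x x'| <= Kb.
Proof.
move=> h x x'.
have K0 : 0 <= Kb by apply: le_trans (h x); exact: emp_diag_ge0.
apply: abs_le_sq => //.
have := @CS R _ (fun j => g x 0 j) (fun j => g x' 0 j).
rewrite -empE.
have -> : \sum_j g x 0 j ^+ 2 = emp_kernel g x x.
  by rewrite empE; apply: eq_bigr => j _; rewrite expr2.
have -> : \sum_j g x' 0 j ^+ 2 = emp_kernel g x' x'.
  by rewrite empE; apply: eq_bigr => j _; rewrite expr2.
move=> h1; apply: le_trans h1 _.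
rewrite expr2; apply: ler_pM => //; exact: emp_diag_ge0.
Qed.

End Emp.

Theorem lemma10 (R : realType) (d : measure_display) (Omega : measurableType d)
  (P : probability Omega R) (X : finType) (f : X -> R) (B' sigma delta : R)
  (T : nat) (k : X -> X -> R) (K0 : R) (p : nat) (g : X -> 'rV[R]_p)
  (L : nat) (eps : R) (zeta : nat -> {RV P >-> R})
  (xq : nat -> Omega -> X) (fb : nat -> Omega -> nat) :
  (forall x, `|f x| <= B') ->
  0 < sigma -> sigma ^+ 2 <= 1 ->
  0 < delta -> delta < 1 ->
  kernel_sym k -> kernel_psd k -> (forall x x', k x x' <= K0) ->
  (forall x x', `|emp_kernel g x x' - k x x'| <= L.+1%:R * eps) ->
  L.+1%:R * eps <= 1 ->
  (forall tau, (1 <= tau <= T)%N -> normal_law P (zeta tau) sigma) ->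
  mutually_independent P (fun tau => zeta tau : Omega -> R) T ->
  (forall t w, (fb t w <= t - 1)%N) ->
  exists E : set Omega, measurable E /\ (P E >= (1 - delta / 4)%:E)%E /\
    forall w, E w -> forall t, (1 <= t <= T)%N -> forall x : X,
      `|mu_fb k sigma f (fun tau => zeta tau : Omega -> R) xq fb t w x
        - mu_fb (emp_kernel g) sigma f (fun tau => zeta tau : Omega -> R) xq fb t w x|
      <= 2 * Num.max 1 K0 * ((t ^ 2)%:R * (L.+1%:R * eps) / sigma ^+ 4)
         * (B' + sigma * Num.sqrt (2 * ln (4 * T%:R / delta))).
Proof.
move=> hf s0 s1 d0 d1 _ kpsd kK0 hke he1 hlaw _ hfb.
set c := sigma * Num.sqrt (2 * ln (4 * T%:R / delta)).
set e := L.+1%:R * eps.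
have c0 : 0 <= c by rewrite mulr_ge0 ?sqrtr_ge0 // ltW.
set S := [set r : R | c < `|r|].
pose F := fun j : nat => (zeta j.+1 : Omega -> R) @^-1` S.
have mF : forall j, measurable (F j) by move=> j; apply: measurable_funPTI; exact: (@meas_S R c).
pose U := \big[setU/set0]_(j < T) F j.
have mU : measurable U by apply: bigsetU_measurable => j _; exact: mF.
exists (~` U); split; first exact: measurableC.
split.
  rewrite probability_setC //.
  have hU : (P U <= (delta / 4)%:E)%E.
    apply: le_trans (Boole_inequality P (fun j _ => mF j)) _.
    apply: (@le_trans _ _ (\sum_(i < T) (delta / (4 * T%:R))%:E)%E).
      apply: lee_sum => i _.
      have Tp : (0 < T)%N by apply: leq_ltn_trans (ltn_ord i).
      have Tr : 0 < T%:R :> R by rewrite ltr0n.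
      have hi : (0 < i.+1 <= T)%N by rewrite /= ltn_ord.
      have h : P (F i) = normal_prob 0 sigma S := hlaw i.+1 hi S (@meas_S R c).
      have h' : (P (F i) <= normal_prob 0 sigma S)%E by rewrite h.
      apply: le_trans h' _.
      apply: le_trans (@tail R sigma c s0 c0) _; rewrite lee_fin.
      have l0 : 0 <= ln (4 * T%:R / delta).
        apply: ln_ge0; rewrite ler_pdivlMr // mul1r.
        have T1 : 1 <= T%:R :> R by rewrite ler1n.
        lra.
      rewrite /c exprMn sqr_sqrtr ?mulr_ge0 //.
      have -> : - (sigma ^+ 2 * (2 * ln (4 * T%:R / delta))) / (sigma ^+ 2 *+ 2)
         = - ln (4 * T%:R / delta).
        by field; rewrite gt_eqF // exprn_gt0.
      rewrite expRN lnK; last by rewrite posrE divr_gt0 // mulr_gt0.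
      by rewrite invf_div.
    rewrite sumEFin lee_fin sumr_const card_ord.
    case: T {hlaw c c0 S F mF U mU} => [|T]; first by rewrite mulr0n divr_ge0 // ltW.
    rewrite -mulr_natr le_eqVlt; apply/orP; left; apply/eqP.
    have hT : (T.+1%:R : R) != 0 by rewrite pnatr_eq0.
    by field.
  have PU0 : (0 <= P U)%E := measure_ge0 P U.
  move: hU PU0; case: (P U) => [r| |] //= hU PU0.
  by rewrite lee_fin in hU; rewrite -EFinD lee_fin; lra.
move=> w hw t /andP[t1 tT] x.
rewrite /mu_fb.
have hn : (fb t w <= t - 1)%N := hfb t w.
have e0 : 0 <= e by apply: le_trans (normr_ge0 _) (hke x x).
have hdiag : forall a, emp_kernel g a a <= K0 + e.
  move=> a; have := hke a a; rewrite ler_norml => /andP[_ h].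
  have h2 := kK0 a a; rewrite /e; lra.
have Kb0 : 0 <= K0 + e by apply: le_trans (hdiag x); exact: emp_diag_ge0.
have hKb := @emp_bound R X p g (K0 + e) hdiag.
have B0 : 0 <= B' by apply: le_trans (hf x); exact: normr_ge0.
have Y0 : 0 <= B' + c by rewrite addr_ge0.
have s2p : 0 < sigma ^+ 2 by rewrite exprn_gt0.
have hy : forall i : 'I_(fb t w), `|f (xq i.+1 w) + zeta i.+1 w| <= B' + c.
  move=> i; apply: le_trans (ler_normD _ _) _; apply: lerD; first exact: hf.
  rewrite leNgt; apply/negP => hc; apply: hw.
  rewrite /U -bigcup_mkord; exists i => //=.
  apply: (leq_trans (ltn_ord i)); apply: (leq_trans hn); exact: (leq_trans (leq_subr 1 t) tT).
have H := @gp_diff R X k (emp_kernel g) (sigma ^+ 2) e (K0 + e) (B' + c) (fb t w)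
  (fun i => xq i.+1 w) (fun i => f (xq i.+1 w) + zeta i.+1 w) x s2p kpsd (@emp_psd R X p g)
  e0 Kb0 Y0 hke hKb hy.
set Dl := `|_| in H *.
rewrite -/c -/e.
have s4 : 0 < sigma ^+ 4 by rewrite exprn_gt0.
rewrite -(ler_pM2l s4).
have -> : sigma ^+ 4 * (2 * Num.max 1 K0 * ((t ^ 2)%:R * e / sigma ^+ 4) * (B' + c))
  = 2 * Num.max 1 K0 * (t%:R ^+ 2) * (e * (B' + c)).
  by rewrite natrX; field; rewrite gt_eqF.
have -> : sigma ^+ 4 = (sigma ^+ 2) ^+ 2 by rewrite -exprM.
apply: le_trans H _.
set N := (fb t w)%:R; set Tt := t%:R; set M := Num.max 1 K0; set Z := e * (B' + c).
have N0 : 0 <= N by [].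
have hN : N + 1 <= Tt.
  by rewrite /N /Tt natr1 ler_nat; move: hn; rewrite leq_subRL // add1n.
have hM1 : 1 <= M by rewrite /M le_max lexx.
have hMK : K0 <= M by rewrite /M le_max lexx orbT.
have Z0 : 0 <= Z by rewrite mulr_ge0.
have q1 : sigma ^+ 2 * (N * Z) <= N * Z.
  by rewrite -[X in _ <= X]mul1r; apply: ler_wpM2r => //; rewrite mulr_ge0.
have q2 : N ^+ 2 * (K0 + e) * Z <= N ^+ 2 * (2 * M) * Z.
  apply: ler_wpM2r => //; apply: ler_wpM2l; first exact: sqr_ge0.
  rewrite /e; lra.
have q3 : N + 2 * M * N ^+ 2 <= 2 * M * Tt ^+ 2.
  have t2 : (N + 1) ^+ 2 <= Tt ^+ 2.
    by rewrite !expr2; apply: ler_pM => //; rewrite addr_ge0.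
  have M0 : 0 <= 2 * M by rewrite mulr_ge0 // (le_trans ler01 hM1).
  have t3 := ler_wpM2l M0 t2.
  have t4 : N <= 4 * M * N.
    rewrite -[X in X <= _]mul1r; apply: ler_wpM2r => //; lra.
  have e3 : 2 * M * (N + 1) ^+ 2 = 2 * M * N ^+ 2 + 4 * M * N + 2 * M by ring.
  rewrite e3 in t3.
  lra.
have q3' := ler_wpM2r Z0 q3.
have -> : sigma ^+ 2 * (N * e * (B' + c)) = sigma ^+ 2 * (N * Z) by rewrite /Z; ring.
have -> : N ^+ 2 * (K0 + e) * e * (B' + c) = N ^+ 2 * (K0 + e) * Z by rewrite /Z; ring.
nra.
Qed.
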